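(* Let $E$ be a real or complex Banach lattice, let $u\in E_+$, and let $\varphi\in E'_+$ be strictly positive. For every bounded real linear operator $T:E\to E$, the following are equivalent: (i) there is $c\in[0,\infty)$ such that $|Tx|\le c\,\langle\varphi,|x|\rangle\,u$ for each $x\in E$; (ii) there is $\hat c\in[0,\infty)$ such that $-\hat c\,u\otimes\varphi\le T\le \hat c\,u\otimes\varphi$; (iii) there is a bounded linear operator $\tilde T: E^\varphi\to E_u$ with $k\circ\tilde T\circ j = T$, where $j:E\to E^\varphi$ and $k:E_u\to E$ are the canonical embeddings.
   Context: A bounded operator is real if it maps the real part of $E$ into itself. $\varphi$ strictly positive: $\langle\varphi,f\rangle>0$ for all $0\ne f\in E_+$. $u\otimes\varphi$ is $f\mapsto\langle\varphi,f\rangle u$; inequalities between operators are in the order of positive operators ($S\le T$ iff $T-S$ maps $E_+$ into $E_+$). $E_u=\{x\in E: |x|\le cu \text{ for some } c\ge 0\}$ is the principal ideal, endowed with the gauge norm $\|x\|_u=\inf\{c>0: |x|\le cu\}$. $E^\varphi$ is the completion of $E$ with respect to the norm $\|f\|_\varphi=\langle\varphi,|f|\rangle$. *)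

(* Defs.v *)
From mathcomp Require Import all_boot all_order all_algebra.
From mathcomp Require Import all_classical all_reals all_analysis.
Import Order.TTheory GRing.Theory Num.Theory numFieldNormedType.Exports.
Set Implicit Arguments. Unset Strict Implicit. Unset Printing Implicit Defensive.
Local Open Scope ring_scope.
Local Open Scope classical_set_scope.

Section BanachLattice.
Variables (R : realType) (E : completeNormedModType R).

Record vector_lattice (le : E -> E -> Prop) : Prop := {
  vl_refl : forall x, le x x;
  vl_antisym : forall x y, le x y -> le y x -> x = y;
  vl_trans : forall x y z, le x y -> le y z -> le x z;
  vl_add : forall x y z, le x y -> le (x + z) (y + z);
  vl_scale : forall (a : R) x y, 0 <= a -> le x y -> le (a *: x) (a *: y);
  vl_sup : forall x y, exists s, [/\ le x s, le y s &
                                  forall t, le x t -> le y t -> le s t]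
}.

Definition is_lub (le : E -> E -> Prop) (A : set E) (s : E) :=
  (forall a, A a -> le a s) /\ (forall t, (forall a, A a -> le a t) -> le s t).

Definition lsup (le : E -> E -> Prop) (x y : E) : E :=
  xget x (is_lub le [set x; y]).

Definition labs (le : E -> E -> Prop) (x : E) : E := lsup le x (- x).

Definition banach_lattice (le : E -> E -> Prop) : Prop :=
  vector_lattice le /\
  (forall x y, le (labs le x) (labs le y) -> `|x| <= `|y|).

(* |x + iy| = sup_{theta} (cos theta x + sin theta y) *)
Definition cabs (le : E -> E -> Prop) (z : (E * E)%type) : E :=
  xget 0 (is_lub le (range (fun t : R => cos t *: z.1 + sin t *: z.2))).

Definition cmuli (z : (E * E)%type) : (E * E)%type := (- z.2, z.1).

Definition creal (x : E) : (E * E)%type := (x, 0).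

Definition strictly_positive_functional (le : E -> E -> Prop) (phi : E -> R) :=
  [/\ forall (a : R) x y, phi (a *: x + y) = a * phi x + phi y,
      exists C : R, forall x, `|phi x| <= C * `|x|,
      forall x, le 0 x -> 0 <= phi x &
      forall x, le 0 x -> x <> 0 -> 0 < phi x].

(* ---------- generic framework ----------
   V     : the (real or complex) Banach lattice, as a real vector space;
   m     : the modulus V -> E (E = real part of V, E_+ its positive cone);
   J     : multiplication by i (the identity in the real case, so that the
           J-commutation conditions are void there);
   iota  : the embedding of the real part E into V. *)
Variables (le : E -> E -> Prop) (V : lmodType R) (m : V -> E) (J : V -> V)
          (iota : E -> V) (u : E) (phi : E -> R).

Definition vnorm (v : V) : R := `| m v |.

(* linearity over the scalar field (R, resp. C = R + R J) *)
Definition scalar_linear (T : V -> V) :=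
  (forall (a : R) x y, T (a *: x + y) = a *: T x + T y) /\
  (forall x, T (J x) = J (T x)).

Definition bounded_op (T : V -> V) :=
  exists C : R, forall x, vnorm (T x) <= C * vnorm x.

Definition real_op (T : V -> V) := forall x, exists y, T (iota x) = iota y.

Definition posV (v : V) := exists g, le 0 g /\ v = iota g.

Definition cond_i (T : V -> V) :=
  exists c : R, 0 <= c /\ forall x, le (m (T x)) ((c * phi (m x)) *: u).

(* (ii) : -c u(x)phi <= T <= c u(x)phi in the order of positive operators,
   i.e. T + c u(x)phi and c u(x)phi - T map E_+ into E_+ *)
Definition cond_ii (T : V -> V) :=
  exists c : R, 0 <= c /\ forall f, le 0 f ->
    posV (T (iota f) + (c * phi f) *: iota u) /\
    posV ((c * phi f) *: iota u - T (iota f)).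

Definition phinorm (v : V) : R := phi (m v).

(* E^phi is realized as Cauchy sequences (for ||.||_phi) modulo null
   sequences; a map out of E^phi is a map on Cauchy sequences that is
   constant on equivalence classes. *)
Definition phi_cauchy (s : nat -> V) :=
  forall e : R, 0 < e -> exists N, forall p q, (N <= p)%N -> (N <= q)%N ->
    phinorm (s p - s q) < e.

Definition phi_null (s : nat -> V) :=
  forall e : R, 0 < e -> exists N, forall p, (N <= p)%N -> phinorm (s p) < e.

Definition completion_norm (s : nat -> V) : R := limn (fun n => phinorm (s n)).

Definition in_Eu (v : V) := exists c : R, 0 <= c /\ le (m v) (c *: u).

Definition gauge_norm (v : V) : R :=
  inf [set c : R | 0 < c /\ le (m v) (c *: u)].

Definition cond_iii (T : V -> V) :=
  exists Tt : (nat -> V) -> V,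
  [/\
      forall s t, phi_cauchy s -> phi_cauchy t ->
        phi_null (fun n => s n - t n) -> Tt s = Tt t,
      forall s, phi_cauchy s -> in_Eu (Tt s),
      (forall (a : R) s t, phi_cauchy s -> phi_cauchy t ->
         Tt (fun n => a *: s n + t n) = a *: Tt s + Tt t) /\
      (forall s, phi_cauchy s -> Tt (fun n => J (s n)) = J (Tt s)),
      exists C : R, 0 <= C /\ forall s, phi_cauchy s ->
        gauge_norm (Tt s) <= C * completion_norm s &
      (* k o Tt o j = T, j x = class of the constant sequence x *)
      forall x, Tt (fun _ => x) = T x].

Definition prop22_equiv (T : V -> V) :=
  (cond_i T <-> cond_ii T) /\ (cond_ii T <-> cond_iii T).

End BanachLattice.

(* Main.v *)
Require Import Defs.
From mathcomp Require Import all_boot all_order all_algebra.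
From mathcomp Require Import all_classical all_reals all_analysis.
From mathcomp Require Import ring lra.
Import Order.TTheory GRing.Theory Num.Theory.
Local Open Scope ring_scope.

Module PropProof.
Import Order.TTheory GRing.Theory Num.Theory numFieldNormedType.Exports.
Set Implicit Arguments. Unset Strict Implicit.
Local Open Scope ring_scope.
Local Open Scope classical_set_scope.

Section Trig.
Variable R : realType.

Lemma near0_ball (f : R -> R) (e : R) : 0 < e -> continuous f ->
  exists2 d, 0 < d & forall t, `|t| < d -> `|f 0 - f t| < e.
Proof.
move=> e0 cf.
have := proj1 (cvgrPdist_lt (f : R -> R) (f 0)) (cf 0) e e0.
move=> H; have [d d0 Hd] := (nbhs_ballP _ _).1 (H _); exists d => // t td; apply: Hd.
by rewrite -ball_normE /= sub0r normrN.
Qed.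

Lemma trig_ucont (e : R) : 0 < e -> exists2 d : R, 0 < d & forall a b, `|a - b| < d ->
  `|cos a - cos b| <= e /\ `|sin a - sin b| <= e.
Proof.
move=> e0; have e20 : 0 < e / 2 by rewrite divr_gt0.
have [d1 d10 H1] := near0_ball e20 (@continuous_cos R).
have [d2 d20 H2] := near0_ball e20 (@continuous_sin R).
exists (Num.min d1 d2); first by rewrite lt_min d10 d20.
move=> a b; rewrite lt_min => /andP[ha hb].
have := H1 _ ha; have := H2 _ hb; rewrite cos0 sin0 sub0r normrN.
have -> : cos a = cos (b + (a - b)) by rewrite addrC subrK.
have -> : sin a = sin (b + (a - b)) by rewrite addrC subrK.
move: (a - b) => t hs hc; rewrite cosD sinD.
have hcb := cos_max b; have hsb := sin_max b.
have Hc : `|cos t - 1| <= e / 2 by rewrite distrC ltW.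
have Hs : `|sin t| <= e / 2 by rewrite ltW.
split.
  have -> : cos b * cos t - sin b * sin t - cos b = cos b * (cos t - 1) - sin b * sin t by ring.
  apply: (le_trans (ler_normB _ _)); rewrite !normrM (splitr e).
  apply: lerD; rewrite -[_ / 2]mul1r; apply: ler_pM => //.
have -> : sin b * cos t + cos b * sin t - sin b = sin b * (cos t - 1) + cos b * sin t by ring.
apply: (le_trans (ler_normD _ _)); rewrite !normrM (splitr e).
apply: lerD; rewrite -[_ / 2]mul1r; apply: ler_pM => //.
Qed.

Lemma cos_int (k : int) a : cos (a + k%:~R * (pi *+ 2)) = cos a :> R.
Proof.
case: k => n.
  by rewrite -pmulrn mulr_natl (periodicn (@cosD2pi R)).
rewrite NegzE intrN mulNr -[in RHS](subrK ((n.+1)%:R * (pi *+ 2)) a).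
by rewrite mulr_natl (periodicn (@cosD2pi R)).
Qed.
Lemma sin_int (k : int) a : sin (a + k%:~R * (pi *+ 2)) = sin a :> R.
Proof.
case: k => n.
  by rewrite -pmulrn mulr_natl (periodicn (@sinD2pi R)).
rewrite NegzE intrN mulNr -[in RHS](subrK ((n.+1)%:R * (pi *+ 2)) a).
by rewrite mulr_natl (periodicn (@sinD2pi R)).
Qed.

Lemma trig_reduce (t : R) : exists t', [/\ 0 <= t', t' < pi *+ 2,
  cos t' = cos t & sin t' = sin t].
Proof.
have p0 : 0 < pi *+ 2 :> R by rewrite pmulrn_rgt0 // pi_gt0.
set k := Num.floor (t / (pi *+ 2)).
have /andP[h1 h2] := floor_itv (t / (pi *+ 2)); rewrite -/k in h1 h2.
have H1' : k%:~R * (pi *+ 2) <= t by rewrite -ler_pdivlMr.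
have H2' : t < (k%:~R + 1) * (pi *+ 2).
  by rewrite -ltr_pdivrMr // -[1]/(1%:~R) -intrD.
exists (t - k%:~R * (pi *+ 2)); split.
- by rewrite subr_ge0.
- by move: H2'; rewrite mulrDl mul1r; lra.
- by rewrite -[in RHS](subrK (k%:~R * (pi *+ 2)) t) cos_int.
- by rewrite -[in RHS](subrK (k%:~R * (pi *+ 2)) t) sin_int.
Qed.

Lemma grid_pt (d T t : R) : 0 < d -> 0 <= t -> t < T ->
  exists k : nat, [/\ (k <= Num.truncn (T / d))%N, 0 <= t - k%:R * d & t - k%:R * d < d].
Proof.
move=> d0 t0 tT; exists (Num.truncn (t / d)).
have /andP[h1 h2] := truncn_itv (divr_ge0 t0 (ltW d0)).
split.
- by apply: le_truncn; rewrite ler_pM2r ?invr_gt0 // ltW.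
- by rewrite subr_ge0 -ler_pdivlMr.
- have : t < ((Num.truncn (t / d))%:R + 1) * d by rewrite -ltr_pdivrMr // natr1.
  by rewrite mulrDl mul1r; lra.
Qed.

Lemma small_inv (e : R) : 0 < e -> exists N, forall p, (N <= p)%N -> (p.+1%:R)^-1 <= e.
Proof.
move=> e0; exists (Num.truncn e^-1) => p Np.
rewrite invf_ple ?posrE ?ltr0Sn //.
apply: ltW; apply: (lt_le_trans (truncnS_gt _)).
by rewrite ler_nat.
Qed.

Lemma seq_cauchy_cvgR (v : nat -> R) :
  (forall e : R, 0 < e -> exists N, forall p q, (N <= p)%N -> (N <= q)%N -> `|v p - v q| < e) ->
  cvgn v.
Proof.
move=> H; apply/cauchy_cvgP; apply/cauchy_exP => e e0.
have [N HN] := H e e0; exists (v N); exists N => // n /= Hn.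
rewrite -ball_normE /=; exact: HN (leqnn N) Hn.
Qed.

Lemma mul_div_le (c f : R) : 0 <= c -> 0 <= f -> c * (f / (c + 1)) <= f.
Proof. move=> c0 f0; rewrite mulrA ler_pdivrMr ?ltr_wpDl //; nra. Qed.

End Trig.

Section VL.
Variables (R : realType) (E : completeNormedModType R) (le : E -> E -> Prop).
Hypothesis Hbl : banach_lattice le.
Let Hvl := Hbl.1.
Local Notation lab := (labs le).

Lemma lrefl x : le x x. Proof. apply: (vl_refl Hvl). Qed.
Lemma ltrans x y z : le x y -> le y z -> le x z. Proof. apply: (vl_trans Hvl). Qed.

Lemma lanti x y : le x y -> le y x -> x = y. Proof. apply: (vl_antisym Hvl). Qed.
Lemma laddr z x y : le x y -> le (x + z) (y + z). Proof. apply: (vl_add Hvl). Qed.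
Lemma laddl z x y : le x y -> le (z + x) (z + y).
Proof. by rewrite ![z + _]addrC; apply: laddr. Qed.
Lemma ladd x y x' y' : le x y -> le x' y' -> le (x + x') (y + y').
Proof. move=> h1 h2; exact: (ltrans (laddr x' h1) (laddl y h2)). Qed.
Lemma lopp x y : le x y -> le (- y) (- x).
Proof.
move=> h; have := laddr (- x - y) h.
by rewrite addrA subrr add0r addrCA subrr addr0.
Qed.
Lemma lsub0 x y : le x y <-> le 0 (y - x).
Proof.
split=> h; first by have := laddr (- x) h; rewrite subrr.
by have := laddr x h; rewrite add0r subrK.
Qed.
Lemma lsub0' x y : le x y <-> le (x - y) 0.
Proof.
split=> h; first by have := laddr (- y) h; rewrite subrr.
by have := laddr y h; rewrite add0r subrK.
Qed.
Lemma lmove a b z : le a (b + z) -> le (a - b) z.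
Proof. by move=> h; have := laddr (- b) h; rewrite addrAC subrr add0r. Qed.
Lemma lscale (a : R) x y : 0 <= a -> le x y -> le (a *: x) (a *: y).
Proof. apply: (vl_scale Hvl). Qed.
Lemma lscale0 (a : R) x : 0 <= a -> le 0 x -> le 0 (a *: x).
Proof. by move=> a0 h; have := lscale a0 h; rewrite scaler0. Qed.
Lemma lscalar (a b : R) x : a <= b -> le 0 x -> le (a *: x) (b *: x).
Proof.
move=> ab x0; apply/lsub0; rewrite -scalerBl; apply: lscale0 => //.
by rewrite subr_ge0.
Qed.

Lemma lsupP x y : is_lub le [set x; y] (lsup le x y).
Proof.
have [s [h1 h2 h3]] := vl_sup Hvl x y; apply: xgetPex; exists s; split.
  by move=> a [->|->].
by move=> t Ht; apply: h3; apply: Ht; [left|right].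
Qed.
Lemma lsup_l x y : le x (lsup le x y). Proof. by apply: (lsupP x y).1; left. Qed.
Lemma lsup_r x y : le y (lsup le x y). Proof. by apply: (lsupP x y).1; right. Qed.
Lemma lsup_least x y t : le x t -> le y t -> le (lsup le x y) t.
Proof. by move=> h1 h2; apply: (lsupP x y).2 => a [->|->]. Qed.

Lemma labs_ge x : le x (lab (x)). Proof. exact: lsup_l. Qed.
Lemma labs_geN x : le (- x) (lab (x)). Proof. exact: lsup_r. Qed.
Lemma labs_least x t : le x t -> le (- x) t -> le (lab (x)) t.
Proof. exact: lsup_least. Qed.

Lemma half_le0 x : le 0 (x + x) -> le 0 x.
Proof.
have a0 : 0 <= (2:R)^-1 by rewrite invr_ge0.
move=> h; have := lscale0 a0 h.
by rewrite -mulr2n -[x *+ 2]scaler_nat scalerA mulVf ?pnatr_eq0 // scale1r.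
Qed.

Lemma labs_ge0 x : le 0 (lab (x)).
Proof. by apply: half_le0; have := ladd (labs_ge x) (labs_geN x); rewrite subrr. Qed.

Lemma labs_pos x : le 0 x -> (lab (x)) = x.
Proof.
move=> x0; apply: lanti; last exact: labs_ge.
apply: labs_least; first exact: lrefl.
by have := lopp x0; rewrite oppr0 => h; exact: ltrans h x0.
Qed.
Lemma labs0 : (lab (0)) = 0. Proof. exact/labs_pos/lrefl. Qed.

Lemma labs_eq0 x : le (lab (x)) 0 -> x = 0.
Proof.
move=> h; have := Hbl.2 x 0; rewrite labs0 => /(_ h).
by rewrite normr0 normr_le0 => /eqP.
Qed.

Lemma labsN x : (lab (- x)) = (lab (x)).
Proof.
apply: lanti; apply: labs_least; rewrite ?opprK.
- exact: labs_geN.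
- exact: labs_ge.
- by have := labs_geN (- x); rewrite opprK.
- exact: labs_ge.
Qed.

Lemma labs_tri x y : le (lab (x + y)) ((lab (x)) + (lab (y))).
Proof.
apply: labs_least; first exact: ladd (labs_ge x) (labs_ge y).
by rewrite opprD; apply: ladd (labs_geN x) (labs_geN y).
Qed.

Lemma labs_scale_le (a : R) x : le (lab (a *: x)) (`|a| *: (lab (x))).
Proof.
have [a0|a0] := leP 0 a.
  rewrite ger0_norm //; apply: labs_least; first exact: lscale (labs_ge x).
  by rewrite -scalerN; apply: lscale (labs_geN x).
rewrite ltr0_norm //; apply: labs_least.
  by rewrite -[a *: x]opprK -scaleNr -scalerN; apply: lscale (labs_geN x); rewrite oppr_ge0 ltW.
by rewrite -scaleNr; apply: lscale (labs_ge x); rewrite oppr_ge0 ltW.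
Qed.

Lemma norm_mono x y : le 0 x -> le x y -> `|x| <= `|y|.
Proof.
move=> x0 xy; apply: Hbl.2; rewrite labs_pos // labs_pos //; exact: ltrans xy.
Qed.

Lemma norm_labs x : `|lab x| = `|x|.
Proof.
apply/eqP; rewrite eq_le; apply/andP; split; apply: Hbl.2;
  rewrite (labs_pos (labs_ge0 x)); apply: lrefl.
Qed.

Lemma lcore a : (forall e : R, 0 < e -> exists z, [/\ le 0 z, le a z & `|z| < e]) ->
  le a 0.
Proof.
move=> H; set p := lsup le a 0.
have p0 : le 0 p by exact: lsup_r.
suff : p = 0 by move=> <-; exact: lsup_l.
apply/eqP; rewrite -normr_eq0; apply/eqP.
apply/eqP; rewrite eq_le normr_ge0 andbT; apply/negP => /negP; rewrite -ltNge => hp.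
have [z [z0 az zn]] := H _ hp.
have pz : le p z by apply: lsup_least.
by have := norm_mono p0 pz; rewrite leNgt zn.
Qed.

Lemma larch h x y : le 0 h -> (forall e : R, 0 < e -> le x (y + e *: h)) -> le x y.
Proof.
move=> h0 H; apply/lsub0'; apply: lcore => e e0.
have h1 : 0 < `|h| + 1 by rewrite ltr_wpDl.
exists ((e / (`|h| + 1)) *: h); split.
- by apply: lscale0 => //; rewrite ltW // divr_gt0.
- by apply/lsub0'; rewrite -addrA -opprD; apply: (proj1 (lsub0' _ _)); apply: H; rewrite divr_gt0.
- rewrite normrZ gtr0_norm ?divr_gt0 // mulrAC ltr_pdivrMr //.
  by rewrite ltr_pM2l // ltrDl.
Qed.

Lemma seq_cauchy_cvg (v : nat -> E) :
  (forall e : R, 0 < e -> exists N, forall p q, (N <= p)%N -> (N <= q)%N -> `|v p - v q| < e) ->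
  cvgn v.
Proof.
move=> H; apply/cauchy_cvgP; apply/cauchy_exP => e e0.
have [N HN] := H e e0; exists (v N); exists N => // n /= Hn.
rewrite -ball_normE /=; exact: HN (leqnn N) Hn.
Qed.

Lemma gcomplete h (v : nat -> E) : le 0 h ->
  (forall e : R, 0 < e -> exists N, forall p q, (N <= p)%N -> (N <= q)%N ->
     le (lab (v p - v q)) (e *: h)) ->
  exists w, forall e : R, 0 < e -> exists N, forall p, (N <= p)%N ->
     le (lab (v p - w)) (e *: h).
Proof.
move=> h0 H.
have h1 : 0 < `|h| + 1 by rewrite ltr_wpDl.
have cv : cvgn v.
  apply: seq_cauchy_cvg => e e0.
  have [N HN] := H (e / (`|h| + 1)) (divr_gt0 e0 h1).
  exists N => p q Np Nq; rewrite -norm_labs.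
  apply: (le_lt_trans (norm_mono (labs_ge0 _) (HN _ _ Np Nq))).
  rewrite normrZ gtr0_norm ?divr_gt0 // mulrAC ltr_pdivrMr //.
  by rewrite ltr_pM2l // ltrDl.
exists (limn v) => e e0.
have [N HN] := H e e0; exists N => p Np.
apply/lsub0'; apply: lcore => e' e'0.
have := proj1 (cvgrPdist_lt v (limn v)) cv e' e'0 => -[N' _ HN'].
set q := maxn N N'.
exists (lab (v q - limn v)); split; first exact: labs_ge0.
  apply: lmove.
  have -> : v p - limn v = (v p - v q) + (v q - limn v) by rewrite addrA subrK.
  apply: (ltrans (labs_tri (v p - v q) (v q - limn v))).
  apply: laddr; apply: HN => //; exact: leq_maxl.
rewrite norm_labs distrC; apply: HN' => /=; exact: leq_maxr.
Qed.


Lemma lmove' a b z : le (a - b) z -> le a (b + z).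
Proof. by move=> h; have := laddl b h; rewrite addrCA subrr addr0. Qed.

Definition wz (z : E * E) (t : R) : E := cos t *: z.1 + sin t *: z.2.

Lemma lscal_abs (a : R) x : le (a *: x) (`|a| *: lab x).
Proof. exact: ltrans (labs_ge _) (labs_scale_le a x). Qed.

Lemma lscal_abs_le (a b : R) x : `|a| <= b -> le (a *: x) (b *: lab x).
Proof. move=> ab; exact: ltrans (lscal_abs a x) (lscalar ab (labs_ge0 x)). Qed.

Lemma fin_sup z (d : R) K : exists g, (forall k, (k <= K)%N -> le (wz z (k%:R * d)) g)
  /\ (forall b, (forall t, le (wz z t) b) -> le g b).
Proof.
elim: K => [|K [g [Hg1 Hg2]]].
  exists (wz z (0%:R * d)); split; last by move=> b Hb; apply: Hb.
  by move=> k; rewrite leqn0 => /eqP ->; apply: lrefl.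
exists (lsup le g (wz z (K.+1%:R * d))); split.
  move=> k; rewrite leq_eqVlt => /orP[/eqP ->|]; first exact: lsup_r.
  by rewrite ltnS => kK; apply: ltrans (Hg1 _ kK) (lsup_l _ _).
by move=> b Hb; apply: lsup_least; [apply: Hg2|apply: Hb].
Qed.

Lemma approx z (e : R) : 0 < e -> exists s,
  (forall t, le (wz z t) (s + e *: (lab z.1 + lab z.2))) /\
  (forall b, (forall t, le (wz z t) b) -> le s b).
Proof.
move=> e0; have [d d0 Hd] := trig_ucont e0.
have [g [Hg1 Hg2]] := fin_sup z d (Num.truncn (pi *+ 2 / d)).
exists g; split => // t.
have [t' [t'0 t'2 ct st]] := trig_reduce t.
have [k [kK k1 k2]] := grid_pt d0 t'0 t'2.
have [hc hs] : `|cos t' - cos (k%:R * d)| <= e /\ `|sin t' - sin (k%:R * d)| <= e.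
  by apply: Hd; rewrite ger0_norm.
rewrite -(subrK (wz z (k%:R * d)) (wz z t)) addrC; apply: ladd (Hg1 k kK) _.
rewrite /wz -ct -st opprD addrACA -!scalerBl scalerDr.
exact: ladd (lscal_abs_le _ hc) (lscal_abs_le _ hs).
Qed.

Lemma cabs_exists z : exists s, is_lub le (range (wz z)) s.
Proof.
have epos : forall n : nat, 0 < (n.+1%:R : R)^-1 by move=> n; rewrite invr_gt0 ltr0Sn.
have [f Hf] := choice (fun n => approx z (epos n)).
set h := lab z.1 + lab z.2.
have h0 : le 0 h by have := ladd (labs_ge0 z.1) (labs_ge0 z.2); rewrite addr0.
have ub : forall p q, le (f p) (f q + (q.+1%:R)^-1 *: h).
  by move=> p q; apply: (Hf p).2 => t; apply: (Hf q).1.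
have [S HS] : exists S, forall e : R, 0 < e -> exists N, forall p, (N <= p)%N ->
     le (lab (f p - S)) (e *: h).
  apply: (gcomplete h0) => e e0.
  have [N HN] := small_inv e0; exists N => p q Np Nq.
  apply: labs_least.
    apply: lmove; apply: ltrans (ub p q) _; apply: laddl; apply: (fun H => lscalar H h0).
    exact: HN.
  rewrite opprB; apply: lmove; apply: ltrans (ub q p) _; apply: laddl.
  apply: (fun H => lscalar H h0); exact: HN.
exists S; split.
  move=> _ [t _ <-]; apply: (larch h0) => e e0.
  have e20 : 0 < e / 2 by rewrite divr_gt0.
  have [N HN] := HS _ e20; have [N' HN'] := small_inv e20.
  set p := maxn N N'.
  apply: ltrans ((Hf p).1 t) _.
  rewrite (splitr e) scalerDl addrA; apply: ladd; last first.
    by apply: (fun H => lscalar H h0); apply: HN'; exact: leq_maxr.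
  apply: lmove'; apply: ltrans (labs_ge _) _; apply: HN; exact: leq_maxl.
move=> b Hb; apply: (larch h0) => e e0.
have [N HN] := HS _ e0.
have fb : le (f N) b by apply: (Hf N).2 => t; apply: Hb; exists t.
apply: (ltrans (y := f N + e *: h)); last exact: laddr _ fb.
apply: lmove'; apply: ltrans (labs_ge _) _; rewrite -opprB labsN; exact: HN.
Qed.

Local Notation cab := (cabs le).

Lemma cabsP z : is_lub le (range (wz z)) (cab z).
Proof. exact: (xgetPex 0 (cabs_exists z)). Qed.

Lemma cabs_ub z t : le (wz z t) (cab z).
Proof. by apply: (cabsP z).1; exists t. Qed.

Lemma cabs_least z b : (forall t, le (wz z t) b) -> le (cab z) b.
Proof. by move=> H; apply: (cabsP z).2 => _ [t _ <-]. Qed.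

Lemma wz_pi z t : wz z (t + pi) = - wz z t.
Proof. by rewrite /wz (cosDpi t) (sinDpi t) !scaleNr opprD. Qed.

Lemma cabs_labs z t : le (lab (wz z t)) (cab z).
Proof. apply: labs_least; first exact: cabs_ub. rewrite -wz_pi; exact: cabs_ub. Qed.

Lemma cabs_ge0 z : le 0 (cab z).
Proof. exact: ltrans (labs_ge0 _) (cabs_labs z 0). Qed.

Lemma wz0 z : wz z 0 = z.1.
Proof. by rewrite /wz cos0 sin0 scale1r scale0r addr0. Qed.

Lemma wz_pihalf z : wz z (pi / 2) = z.2.
Proof. by rewrite /wz cos_pihalf sin_pihalf scale1r scale0r add0r. Qed.

Lemma cabs_fst z : le (lab z.1) (cab z).
Proof. by rewrite -wz0; apply: cabs_labs. Qed.

Lemma cabs_snd z : le (lab z.2) (cab z).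
Proof. by rewrite -wz_pihalf; apply: cabs_labs. Qed.

Lemma cabs_sum z : le (cab z) (lab z.1 + lab z.2).
Proof.
apply: cabs_least => t; rewrite /wz.
rewrite -[lab z.1]scale1r -[lab z.2]scale1r.
exact: ladd (lscal_abs_le _ (cos_max t)) (lscal_abs_le _ (sin_max t)).
Qed.

Lemma cabs_real x : cab (x, 0) = lab x.
Proof.
apply: lanti; last exact: cabs_fst (x, 0).
apply: cabs_least => t; rewrite /wz /= scaler0 addr0 -[lab x]scale1r.
exact: lscal_abs_le _ (cos_max t).
Qed.

Lemma cabs_tri z z' : le (cab (z + z')) (cab z + cab z').
Proof.
apply: cabs_least => t.
have -> : wz (z + z') t = wz z t + wz z' t by rewrite /wz /= !scalerDr addrACA.
exact: ladd (cabs_ub z t) (cabs_ub z' t).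
Qed.

Lemma cabs_scale (a : R) z : le (cab (a *: z)) (`|a| *: cab z).
Proof.
apply: cabs_least => t.
have -> : wz (a *: z) t = a *: wz z t by rewrite /wz /= scalerDr !scalerA [a * _]mulrC [a * sin t]mulrC.
apply: ltrans (lscal_abs a _) _; apply: lscale => //; exact: cabs_labs.
Qed.

Lemma cabs_J z : le (cab (cmuli z)) (cab z).
Proof.
apply: cabs_least => t.
have -> : wz (cmuli z) t = wz z (t - pi / 2).
  by rewrite /wz /= cosBpihalf sinBpihalf scalerN scaleNr addrC.
exact: cabs_ub.
Qed.

Lemma cabs_eq0 z : le (cab z) 0 -> z = 0.
Proof.
move=> h; case: z h => x y h.
have -> : x = 0 by apply: labs_eq0; exact: ltrans (cabs_fst (x, y)) h.
have -> : y = 0 by apply: labs_eq0; exact: ltrans (cabs_snd (x, y)) h.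
by [].
Qed.

Section Generic.
Variables (V : lmodType R) (m : V -> E) (J : V -> V) (iota : E -> V) (u : E) (phi : E -> R).
Hypothesis Hu : le 0 u.
Hypothesis Hphi : strictly_positive_functional le phi.
Hypothesis Hm0 : forall v, le 0 (m v).
Hypothesis Htri : forall v w, le (m (v + w)) (m v + m w).
Hypothesis Hsc : forall (a : R) v, le (m (a *: v)) (`|a| *: m v).
Hypothesis HmJ : forall v, le (m (J v)) (m v).
Hypothesis HJlin : forall (a : R) v w, J (a *: v + w) = a *: J v + J w.
Hypothesis Hmeq0 : forall v, le (m v) 0 -> v = 0.
Hypothesis Hmiota : forall x, m (iota x) = lab x.
Hypothesis Hiota : forall (a : R) x y, iota (a *: x + y) = a *: iota x + iota y.
Hypothesis Hcomplete : forall v : nat -> V,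
  (forall e : R, 0 < e -> exists N, forall p q, (N <= p)%N -> (N <= q)%N ->
     le (m (v p - v q)) (e *: u)) ->
  exists w, forall e : R, 0 < e -> exists N, forall p, (N <= p)%N ->
     le (m (v p - w)) (e *: u).

Lemma phiL a x y : phi (a *: x + y) = a * phi x + phi y.
Proof. by case: Hphi. Qed.
Lemma phi0 : phi 0 = 0.
Proof. have := phiL 1 0 0; rewrite scale1r addr0 mul1r => h; lra. Qed.
Lemma phiD x y : phi (x + y) = phi x + phi y.
Proof. by rewrite -[x]scale1r phiL mul1r scale1r. Qed.
Lemma phiZ a x : phi (a *: x) = a * phi x.
Proof. by rewrite -[a *: x]addr0 phiL phi0 addr0. Qed.
Lemma phiB x y : phi (x - y) = phi x - phi y.
Proof. by rewrite phiD -scaleN1r phiZ mulN1r. Qed.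
Lemma phi_ge0 x : le 0 x -> 0 <= phi x.
Proof. by case: Hphi => _ _ H _; apply: H. Qed.
Lemma phi_mono x y : le x y -> phi x <= phi y.
Proof. by move/lsub0/phi_ge0; rewrite phiB subr_ge0. Qed.

Lemma m0 : m 0 = 0.
Proof.
apply: lanti; last exact: Hm0.
by have := Hsc 0 0; rewrite scale0r normr0 scale0r.
Qed.
Lemma mN v : le (m (- v)) (m v).
Proof. by have := Hsc (-1) v; rewrite scaleN1r normrN normr1 scale1r. Qed.
Lemma mB v w : le (m (v - w)) (m (w - v)).
Proof. by rewrite -opprB; apply: mN. Qed.
Lemma mtri3 v w x : le (m (v - w)) (m (v - x) + m (x - w)).
Proof. by have -> : v - w = (v - x) + (x - w) by rewrite addrA subrK. Qed.

Definition gconv (v : nat -> V) w := forall e : R, 0 < e -> exists N, forall p, (N <= p)%N ->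
  le (m (v p - w)) (e *: u).

Lemma gconv_uniq v w w' : gconv v w -> gconv v w' -> w = w'.
Proof.
move=> h1 h2; apply/eqP; rewrite -subr_eq0; apply/eqP; apply: Hmeq0.
apply: (larch Hu) => e e0; rewrite add0r.
have e20 : 0 < e / 2 by rewrite divr_gt0.
have [N1 H1] := h1 _ e20; have [N2 H2] := h2 _ e20.
set p := maxn N1 N2.
apply: ltrans (mtri3 w w' (v p)) _.
rewrite (splitr e) scalerDl; apply: ladd.
  by apply: ltrans (mB _ _) _; apply: H1; exact: leq_maxl.
by apply: H2; exact: leq_maxr.
Qed.

Lemma gconv_shift v v' w : gconv v w ->
  (forall e : R, 0 < e -> exists N, forall p, (N <= p)%N -> le (m (v' p - v p)) (e *: u)) ->
  gconv v' w.
Proof.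
move=> h1 h2 e e0.
have e20 : 0 < e / 2 by rewrite divr_gt0.
have [N1 H1] := h1 _ e20; have [N2 H2] := h2 _ e20.
exists (maxn N1 N2) => p Np.
apply: ltrans (mtri3 _ _ (v p)) _.
rewrite (splitr e) scalerDl; apply: ladd.
  by apply: H2; apply: leq_trans Np; exact: leq_maxr.
by apply: H1; apply: leq_trans Np; exact: leq_maxl.
Qed.

Lemma small_mul (c x e : R) : 0 <= c -> 0 <= x -> x < e / (c + 1) -> c * x <= e.
Proof.
move=> c0 x0; rewrite ltr_pdivlMr ?ltr_wpDl // => h; nra.
Qed.

Section WithT.
Variable T : V -> V.
Hypothesis HT : scalar_linear J T.

Lemma TL a x y : T (a *: x + y) = a *: T x + T y. Proof. exact: HT.1. Qed.
Lemma TJ x : T (J x) = J (T x). Proof. exact: HT.2. Qed.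
Lemma T0 : T 0 = 0.
Proof.
have := TL 1 0 0; rewrite !scale1r addr0 => /(congr1 (fun w => w - T 0)).
by rewrite subrr addrK => /esym.
Qed.
Lemma TD x y : T (x + y) = T x + T y.
Proof. by rewrite -[x]scale1r TL !scale1r. Qed.
Lemma TZ a x : T (a *: x) = a *: T x.
Proof. by rewrite -[a *: x]addr0 TL T0 addr0. Qed.
Lemma TB x y : T (x - y) = T x - T y.
Proof. by rewrite TD -scaleN1r TZ scaleN1r. Qed.

Lemma JB x y : J (x - y) = J x - J y.
Proof. by rewrite -scaleN1r addrC HJlin scaleN1r addrC. Qed.

End WithT.

Lemma iota0 : iota 0 = 0.
Proof.
have := Hiota 1 0 0; rewrite !scale1r addr0 => /(congr1 (fun w => w - iota 0)).
by rewrite subrr addrK => /esym.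
Qed.
Lemma iotaN x : iota (- x) = - iota x.
Proof. by have := Hiota (-1) x 0; rewrite !addr0 iota0 addr0 !scaleN1r. Qed.

Section WithT2.
Variable T : V -> V.
Hypothesis HT : scalar_linear J T.

Lemma i_to_ii : real_op iota T -> cond_i le m u phi T -> cond_ii le iota u phi T.
Proof.
move=> Hr [c [c0 Hc]]; exists c; split => // f f0.
have [y Hy] := Hr f.
have hy : le (lab y) ((c * phi f) *: u).
  by have := Hc (iota f); rewrite Hy !Hmiota (labs_pos f0).
split.
- exists (y + (c * phi f) *: u); split.
    by have := (lsub0 _ _).1 (ltrans (labs_geN y) hy); rewrite opprK addrC.
  by rewrite Hy [y + _]addrC Hiota addrC.
- exists ((c * phi f) *: u - y); split.
    exact: (lsub0 _ _).1 (ltrans (labs_ge y) hy).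
  by rewrite Hy Hiota iotaN.
Qed.

Lemma iii_to_i : cond_iii le m J u phi T -> cond_i le m u phi T.
Proof.
move=> [Tt [_ HEu _ [C [C0 HC]] Hfix]]; exists C; split => // x.
have hc : phi_cauchy m phi (fun _ => x).
  by move=> e e0; exists 0%N => p q _ _; rewrite /phinorm subrr m0 phi0.
have := HC _ hc; rewrite Hfix /completion_norm /phinorm norm_lim_cst => hg.
have [c1 [c10 Hc1]] := HEu _ hc; rewrite Hfix in Hc1.
set S := [set c : R | 0 < c /\ le (m (T x)) (c *: u)].
have ne : S !=set0.
  exists (c1 + 1); split; first by rewrite ltr_wpDl.
  by apply: ltrans Hc1 _; apply: lscalar Hu; rewrite lerDl.
apply: (ltrans (y := gauge_norm le m u (T x) *: u)); last first.
  by apply: lscalar Hu.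
apply: (larch Hu) => e e0.
rewrite /gauge_norm -/S.
have hlt : inf S < inf S + e by rewrite ltrDl.
have [y [y0 hy] ylt] := inf_lt ne hlt.
apply: ltrans hy _; rewrite -scalerDl; apply: lscalar Hu; exact: ltW.
Qed.

Lemma i_to_iii : cond_i le m u phi T -> cond_iii le m J u phi T.
Proof.
move=> [c [c0 Hc]].
have c1 : 0 < c + 1 by rewrite ltr_wpDl.
have Tc : forall s, phi_cauchy m phi s -> forall e : R, 0 < e -> exists N,
    forall p q, (N <= p)%N -> (N <= q)%N -> le (m (T (s p) - T (s q))) (e *: u).
  move=> s hs e e0; have [N HN] := hs (e / (c + 1)) (divr_gt0 e0 c1).
  exists N => p q Np Nq; rewrite -(TB HT); apply: ltrans (Hc _) _.
  apply: lscalar Hu; apply: small_mul c0 (phi_ge0 (Hm0 _)) (HN p q Np Nq).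
pose Tt := fun s : nat -> V => xget 0 (gconv (fun n => T (s n))).
have TtP : forall s, phi_cauchy m phi s -> gconv (fun n => T (s n)) (Tt s).
  by move=> s hs; apply: (xgetPex 0 (Hcomplete (Tc s hs))).
have TtE : forall s w, gconv (fun n => T (s n)) w -> Tt s = w.
  by move=> s w h; apply: gconv_uniq (xgetPex 0 (ex_intro _ w h)) h.
have Tnull : forall s t, (forall e : R, 0 < e -> exists N, forall p, (N <= p)%N ->
      phi (m (s p - t p)) < e) ->
    forall e : R, 0 < e -> exists N, forall p, (N <= p)%N ->
      le (m (T (s p) - T (t p))) (e *: u).
  move=> s t hn e e0; have [N HN] := hn (e / (c + 1)) (divr_gt0 e0 c1).
  exists N => p Np; rewrite -(TB HT); apply: ltrans (Hc _) _.
  apply: lscalar Hu; apply: small_mul c0 (phi_ge0 (Hm0 _)) (HN p Np).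
exists Tt; split.
- move=> s t hs ht hn; apply: TtE; apply: gconv_shift (TtP t ht) _.
  exact: Tnull.
- move=> s hs; have [N HN] := TtP s hs 1 ltr01.
  exists (1 + c * phi (m (s N))); split.
    by rewrite addr_ge0 // mulr_ge0 // phi_ge0.
  have := Htri (Tt s - T (s N)) (T (s N)); rewrite subrK => h.
  apply: ltrans h _; rewrite scalerDl; apply: ladd (Hc _).
  by apply: ltrans (mB _ _) _; apply: HN.
- split.
  + move=> a s t hs ht; apply: TtE => e e0.
    have e20 : 0 < e / 2 by rewrite divr_gt0.
    have a1 : 0 < `|a| + 1 by rewrite ltr_wpDl.
    have [N1 H1] := TtP s hs _ (divr_gt0 e20 a1).
    have [N2 H2] := TtP t ht _ e20.
    exists (maxn N1 N2) => p Np.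
    rewrite (TL HT).
    have -> : a *: T (s p) + T (t p) - (a *: Tt s + Tt t) =
        a *: (T (s p) - Tt s) + (T (t p) - Tt t) by rewrite scalerBr opprD addrACA.
    apply: ltrans (Htri _ _) _; rewrite (splitr e) scalerDl; apply: ladd.
      apply: ltrans (Hsc _ _) _.
      apply: ltrans (lscale (normr_ge0 a) (H1 p _)) _.
        by apply: leq_trans Np; exact: leq_maxl.
      rewrite scalerA; apply: lscalar Hu; apply: mul_div_le => //; exact: ltW.
    by apply: H2; apply: leq_trans Np; exact: leq_maxr.
  + move=> s hs; apply: TtE => e e0.
    have [N HN] := TtP s hs e e0; exists N => p Np.
    by rewrite (TJ HT) -JB; apply: ltrans (HmJ _) (HN p Np).
- exists c; split => // s hs.
  have cv : cvgn (fun n => phi (m (s n))).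
    apply: seq_cauchy_cvgR => e e0; have [N HN] := hs e e0.
    exists N => p q Np Nq; have := HN p q Np Nq; rewrite /phinorm => h.
    have h1 : phi (m (s p)) <= phi (m (s p - s q)) + phi (m (s q)).
      rewrite -phiD; apply: phi_mono.
      by have := Htri (s p - s q) (s q); rewrite subrK.
    have h2 : phi (m (s q)) <= phi (m (s p - s q)) + phi (m (s p)).
      rewrite -phiD; apply: phi_mono.
      have := Htri (s q - s p) (s p); rewrite subrK => h3.
      apply: ltrans h3 _; apply: laddr; exact: mB.
    rewrite ltr_distlC; apply/andP; split; lra.
  set L := completion_norm m phi s.
  have hL := proj1 (cvgrPdist_lt (fun n => phi (m (s n))) L) cv.
  have L0 : 0 <= L.
    apply/ler_addgt0Pr => e e0.
    have [N _ HN] := hL _ e e0; have := HN N (leqnn N) => /=.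
    have := phi_ge0 (Hm0 (s N)); rewrite ltr_distlC => hp /andP[h1 h2]; lra.
  apply/ler_addgt0Pr => e e0.
  set S := [set c : R | 0 < c /\ le (m (Tt s)) (c *: u)].
  have hlb : has_lbound S by exists 0 => y [y0 _]; exact: ltW.
  apply: (ge_inf hlb); split; first by rewrite ltr_pwDr // mulr_ge0.
  have e20 : 0 < e / 2 by rewrite divr_gt0.
  have [N1 H1] := TtP s hs _ e20.
  have [N2 _ H2] := hL _ _ (divr_gt0 e20 c1).
  set p := maxn N1 N2.
  have hp : `|L - phi (m (s p))| < e / 2 / (c + 1) by apply: H2 => /=; exact: leq_maxr.
  have hm := Htri (Tt s - T (s p)) (T (s p)); rewrite subrK in hm.
  apply: ltrans hm _.
  apply: (ltrans (y := (e / 2 + c * phi (m (s p))) *: u)).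
    rewrite scalerDl; apply: ladd (Hc _).
    by apply: ltrans (mB _ _) _; apply: H1; exact: leq_maxl.
  apply: lscalar Hu.
  have hmd := mul_div_le c0 (ltW e20).
  move: hp; rewrite ltr_distlC => /andP[hp1 hp2].
  have : c * phi (m (s p)) <= c * (L + e / 2 / (c + 1)).
    by apply: ler_wpM2l => //; exact: ltW.
  rewrite mulrDr [_ * (_ / _ / _)]mulrA -[c * (e / 2) / (c + 1)]mulrA.
  move: hmd; rewrite (splitr e); lra.
- move=> x; apply: TtE => e e0; exists 0%N => p _.
  by rewrite subrr m0; apply: lscale0 (ltW e0) Hu.
Qed.

Lemma generic_equiv : (cond_ii le iota u phi T -> cond_i le m u phi T) ->
  real_op iota T -> prop22_equiv le m J iota u phi T.
Proof.
move=> ii_i Hr; split; split.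
- exact: i_to_ii.
- exact: ii_i.
- by move=> h; apply: i_to_iii; apply: ii_i.
- by move=> h; apply: i_to_ii => //; apply: iii_to_i.
Qed.

End WithT2.
End Generic.

Lemma real_ii_i (u : E) (phi : E -> R) (T : E -> E) : le 0 u ->
  strictly_positive_functional le phi -> scalar_linear (@id E) T ->
  cond_ii le (@id E) u phi T -> cond_i le (labs le) u phi T.
Proof.
move=> Hu Hphi HT [c [c0 Hc]].
have B : forall f, le 0 f -> le (T f) ((c * phi f) *: u) /\ le (- T f) ((c * phi f) *: u).
  move=> f f0; have [[g1 [g10 e1]] [g2 [g20 e2]]] := Hc f f0.
  split.
    by apply/lsub0; rewrite /= e2.
  by apply/lsub0; rewrite opprK addrC /= e1.
exists (c * 3); split; first by rewrite mulr_ge0.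
move=> x.
have q0 : le 0 (lab x - x) := (lsub0 _ _).1 (labs_ge x).
have [Bp1 Bp2] := B _ (labs_ge0 x).
have [Bq1 Bq2] := B _ q0.
have ex : T x = T (lab x) - T (lab x - x) by rewrite -(TB HT) opprB addrC subrK.
have hphx := phi_mono Hphi (labs_geN x).
have hq : phi (lab x - x) = phi (lab x) - phi x by rewrite (phiB Hphi).
apply: (ltrans (y := (c * phi (lab x) + c * phi (lab x - x)) *: u)).
  apply: labs_least; rewrite ex scalerDl.
    exact: ladd Bp1 Bq2.
  rewrite opprB addrC; exact: ladd Bp2 Bq1.
apply: lscalar Hu; rewrite hq.
have hN : phi (- x) = - phi x by rewrite -scaleN1r (phiZ Hphi) mulN1r.
rewrite hN in hphx; have h0 := phi_ge0 Hphi (labs_ge0 x).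
nra.
Qed.

Lemma real_case (u : E) (phi : E -> R) : le 0 u -> strictly_positive_functional le phi ->
  forall T : E -> E, scalar_linear (@id E) T -> bounded_op (labs le) T ->
  prop22_equiv le (labs le) (@id E) (@id E) u phi T.
Proof.
move=> Hu Hphi T HT _.
apply: (generic_equiv (m := labs le) (J := id) (iota := id) Hu Hphi) => //.
- exact: labs_ge0.
- exact: labs_tri.
- exact: labs_scale_le.
- by move=> v; apply: lrefl.
- exact: labs_eq0.
- by move=> v Hv; apply: (gcomplete Hu Hv).
- exact: real_ii_i.
- by move=> x; exists (T x).
Qed.

Lemma ccomplete (u : E) (v : nat -> (E * E)%type) : le 0 u ->
  (forall e : R, 0 < e -> exists N, forall p q, (N <= p)%N -> (N <= q)%N ->
     le (cab (v p - v q)) (e *: u)) ->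
  exists w, forall e : R, 0 < e -> exists N, forall p, (N <= p)%N ->
     le (cab (v p - w)) (e *: u).
Proof.
move=> Hu H.
have [w1 H1] : exists w, forall e : R, 0 < e -> exists N, forall p, (N <= p)%N ->
     le (lab ((v p).1 - w)) (e *: u).
  apply: (gcomplete Hu) => e e0; have [N HN] := H e e0; exists N => p q Np Nq.
  exact: ltrans (cabs_fst (v p - v q)) (HN p q Np Nq).
have [w2 H2] : exists w, forall e : R, 0 < e -> exists N, forall p, (N <= p)%N ->
     le (lab ((v p).2 - w)) (e *: u).
  apply: (gcomplete Hu) => e e0; have [N HN] := H e e0; exists N => p q Np Nq.
  exact: ltrans (cabs_snd (v p - v q)) (HN p q Np Nq).
exists (w1, w2) => e e0.
have e20 : 0 < e / 2 by rewrite divr_gt0.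
have [N1 HN1] := H1 _ e20; have [N2 HN2] := H2 _ e20.
exists (maxn N1 N2) => p Np.
apply: ltrans (cabs_sum _) _; rewrite (splitr e) scalerDl; apply: ladd.
  by apply: HN1; apply: leq_trans Np; exact: leq_maxl.
by apply: HN2; apply: leq_trans Np; exact: leq_maxr.
Qed.

Lemma complex_ii_i (u : E) (phi : E -> R) (T : (E * E)%type -> (E * E)%type) : le 0 u ->
  strictly_positive_functional le phi -> scalar_linear (@cmuli R E) T ->
  real_op (@creal R E) T ->
  cond_ii le (@creal R E) u phi T -> cond_i le (cabs le) u phi T.
Proof.
move=> Hu Hphi HT Hr [c [c0 Hc]].
pose Tr x := (T (x, 0)).1.
have TrE : forall x, T (x, 0) = (Tr x, 0).
  by move=> x; have [y Hy] := Hr x; rewrite /Tr /creal in Hy *; rewrite Hy.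
have TrL : forall a x y, Tr (a *: x + y) = a *: Tr x + Tr y.
  move=> a x y; rewrite /Tr.
  have -> : (a *: x + y, 0) = a *: (x, 0) + (y, 0) :> (E * E)%type.
    by congr (_, _); rewrite /= scaler0 addr0.
  by rewrite (TL HT).
have HTr : scalar_linear (@id E) Tr by split.
have Hii : cond_ii le (@id E) u phi Tr.
  exists c; split => // f f0; have [[g1 [g10 e1]] [g2 [g20 e2]]] := Hc f f0.
  move: e1 e2; rewrite /creal TrE => e1 e2.
  split.
    by exists g1; split => //; move: e1 => /(congr1 fst).
  by exists g2; split => //; move: e2 => /(congr1 fst).
have [c' [c'0 Hc']] := real_ii_i Hu Hphi HTr Hii.
exists c'; split => // -[x y].
have -> : T (x, y) = (Tr x, Tr y).
  have -> : (x, y) = (x, 0) + cmuli (y, 0) :> (E * E)%type.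
    by rewrite /cmuli /=; congr (_, _); rewrite /= ?oppr0 ?addr0 ?add0r.
  rewrite (TD HT) (TJ HT) !TrE /cmuli /=; congr (_, _); rewrite /= ?oppr0 ?addr0 ?add0r //.
apply: cabs_least => t.
have -> : wz (Tr x, Tr y) t = Tr (wz (x, y) t) by rewrite /wz /= TrL (TZ HTr).
apply: ltrans (labs_ge _) _; apply: ltrans (Hc' _) _.
apply: lscalar Hu; apply: ler_wpM2l => //; apply: (phi_mono Hphi); exact: cabs_labs.
Qed.

Lemma complex_case (u : E) (phi : E -> R) : le 0 u -> strictly_positive_functional le phi ->
  forall T : (E * E)%type -> (E * E)%type,
  scalar_linear (@cmuli R E) T -> bounded_op (cabs le) T -> real_op (@creal R E) T ->
  prop22_equiv le (cabs le) (@cmuli R E) (@creal R E) u phi T.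
Proof.
move=> Hu Hphi T HT _ Hr.
apply: (generic_equiv (m := cabs le) (J := @cmuli R E) (iota := @creal R E) Hu Hphi) => //.
- exact: cabs_ge0.
- exact: cabs_tri.
- exact: cabs_scale.
- exact: cabs_J.
- move=> a v w; rewrite /cmuli; congr (_, _); rewrite /= ?scalerN ?opprD //.
- exact: cabs_eq0.
- exact: cabs_real.
- by move=> a x y; rewrite /creal; congr (_, _); rewrite /= scaler0 addr0.
- by move=> v Hv; apply: (ccomplete Hu Hv).
- exact: complex_ii_i.
Qed.
End VL.

End PropProof.

Theorem proposition2p2 (R : realType) (E : completeNormedModType R)
  (le : E -> E -> Prop) (u : E) (phi : E -> R) :
  banach_lattice le -> le 0 u -> strictly_positive_functional le phi ->
  (* real Banach lattice E *)
  (forall T : E -> E,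
     scalar_linear (@id E) T -> bounded_op (labs le) T ->
     prop22_equiv le (labs le) (@id E) (@id E) u phi T) /\
  (* complex Banach lattice E_C = E + iE *)
  (forall T : (E * E)%type -> (E * E)%type,
     scalar_linear (@cmuli R E) T -> bounded_op (cabs le) T ->
     real_op (@creal R E) T ->
     prop22_equiv le (cabs le) (@cmuli R E) (@creal R E) u phi T).
Proof.
move=> Hbl Hu Hphi; split.
- exact: (PropProof.real_case Hbl Hu Hphi).
- exact: (PropProof.complex_case Hbl Hu Hphi).
Qed.
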